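(* Let $i,j\in\mathbb Z^{\geq 0}$. Then for all $n\in\mathbb N$: (i) $f_{i,j}(n)+1=f_{i,j-1}(n)$; (ii) $f_{i+1,j}(n)+1=f_{i+1,j-1}(n)$; (iii) $f_{i,0}(a(n))+1=f_{i+1,F(i+1)-1}(n)$; (iv) $f_{i,0}(b(n))+1=f_{i,F(i+2)-1}(b(n)+1)$; (v) $f_{i+1,0}(n)+1=f_{i,F(i+2)-1}(a(n)+1)$.
   Context: $\mathbb N=\{1,2,\dots\}$, $\varphi=\frac{1+\sqrt5}{2}$, $a(n)=\lfloor n\varphi\rfloor$, $b(n)=\lfloor n\varphi^2\rfloor$. $F$ is the Fibonacci sequence with $F(0)=0$, $F(1)=F(2)=1$, $F(n)=F(n-1)+F(n-2)$. For $i\in\mathbb Z^{\geq 0}$, $j\in\mathbb Z$, $f_{i,j}(n)=F(i+1)a(n)+F(i)n-j$ for $n\in\mathbb N$. *)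

(* Defs.v *)
From Stdlib Require Import Reals ZArith.
Open Scope R_scope.

Definition phi : R := (1 + sqrt 5) / 2.

Definition rfloor (x : R) : Z := Int_part x.

(* a(n) = floor(n phi), b(n) = floor(n phi^2), as naturals (values are >= 0) *)
Definition a (n : nat) : nat := Z.to_nat (rfloor (INR n * phi)).
Definition b (n : nat) : nat := Z.to_nat (rfloor (INR n * phi ^ 2)).

Fixpoint F (n : nat) : nat :=
  match n with
  | O => O
  | S m => match m with
           | O => 1%nat
           | S k => (F m + F k)%nat
           end
  end.

Definition fij (i : nat) (j : Z) (n : nat) : Z :=
  (Z.of_nat (F (i + 1)) * Z.of_nat (a n) + Z.of_nat (F i) * Z.of_nat n - j)%Z.

(* Main.v *)
Require Import Defs.
From Stdlib Require Import Reals ZArith.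
From Stdlib Require Import Lra Lia Psatz.
Open Scope R_scope.

Lemma sq5 : sqrt 5 * sqrt 5 = 5. Proof. apply sqrt_sqrt; lra. Qed.
Lemma s_bounds : 2 < sqrt 5 < 3.
Proof. pose proof sq5. pose proof (sqrt_pos 5). split; nra. Qed.
Lemma phi_sq : phi * phi = phi + 1.
Proof. unfold phi. pose proof sq5. nra. Qed.
Lemma phi_bounds : 3/2 < phi < 2.
Proof. unfold phi. pose proof s_bounds. lra. Qed.

Lemma fl_bounds x : IZR (rfloor x) <= x < IZR (rfloor x) + 1.
Proof. unfold rfloor. destruct (base_Int_part x); lra. Qed.

Lemma fl_char x k : IZR k <= x -> x < IZR k + 1 -> rfloor x = k.
Proof.
  intros H1 H2. unfold rfloor, Int_part.
  assert (up x = (k+1)%Z). { symmetry. apply tech_up; rewrite plus_IZR; simpl; lra. }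
  lia.
Qed.

Lemma fl_nonneg x : 0 <= x -> (0 <= rfloor x)%Z.
Proof. intros H. pose proof (fl_bounds x). assert (-1 < rfloor x)%Z; [apply lt_IZR; simpl; lra|lia]. Qed.

Lemma aZ n : Z.of_nat (a n) = rfloor (INR n * phi).
Proof. unfold a. rewrite Z2Nat.id; auto. apply fl_nonneg. pose proof (pos_INR n); pose proof phi_bounds; nra. Qed.

Lemma desc : forall N (n m : Z), (Z.abs_nat n < N)%nat -> (m*m = 5*n*n)%Z -> n = 0%Z.
Proof.
  induction N; intros n m Hl He; [lia|].
  destruct (Z.eq_dec n 0) as [|Hn]; auto.
  assert (Hm : (m mod 5 = 0)%Z).
  { pose proof (Z.div_mod m 5 ltac:(lia)). pose proof (Z.mod_pos_bound m 5 ltac:(lia)).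
    set (q := (m / 5)%Z) in *. set (r := (m mod 5)%Z) in *.
    assert (r = 0 \/ r = 1 \/ r = 2 \/ r = 3 \/ r = 4)%Z as Hr by lia.
    rewrite H in He.
    destruct Hr as [Hr|[Hr|[Hr|[Hr|Hr]]]]; rewrite Hr in He; lia. }
  pose proof (Z.div_mod m 5 ltac:(lia)). rewrite Hm, Z.add_0_r in H.
  set (q := (m / 5)%Z) in *.
  assert (n*n = 5*q*q)%Z by lia.
  assert (q = 0)%Z by (apply (IHN q n); [nia|lia]). rewrite H1 in H0. nia.
Qed.

Lemma irr n k : (1 <= n)%nat -> INR n * phi <> IZR k.
Proof.
  intros Hn He. unfold phi in He. pose proof sq5.
  assert (INR n * sqrt 5 = IZR (2*k - Z.of_nat n)).
  { rewrite minus_IZR, mult_IZR, <- INR_IZR_INZ. simpl. lra. }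
  assert (IZR ((2*k - Z.of_nat n)*(2*k - Z.of_nat n)) = IZR (5 * Z.of_nat n * Z.of_nat n)).
  { rewrite !mult_IZR, <- H0, <- INR_IZR_INZ. simpl. nra. }
  apply eq_IZR in H1. apply (desc (S (Z.abs_nat (Z.of_nat n)))) in H1; lia.
Qed.

Lemma INR_Z m : INR m = IZR (Z.of_nat m).
Proof. apply INR_IZR_INZ. Qed.

Ltac norm := rewrite ?plus_IZR, ?minus_IZR, ?mult_IZR; repeat rewrite <- INR_Z; try replace (INR 1) with 1 by reflexivity.

Lemma lemA n : (1 <= n)%nat -> Z.of_nat (a (a n)) = (Z.of_nat (a n) + Z.of_nat n - 1)%Z.
Proof.
  intros Hn. rewrite (aZ (a n)), INR_Z, aZ.
  pose proof (fl_bounds (INR n * phi)). set (k := rfloor (INR n * phi)) in *.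
  pose proof (irr n k Hn). pose proof phi_sq; pose proof phi_bounds.
  apply fl_char; rewrite minus_IZR, plus_IZR, <- INR_Z.
  - assert (Hx : INR n * phi * phi = INR n * phi + INR n) by (rewrite Rmult_assoc, H1; ring).
    assert (0 <= (INR n * phi - IZR k) * (2 - phi)) by (apply Rmult_le_pos; lra). nra.
  - assert (Hx : INR n * phi * phi = INR n * phi + INR n) by (rewrite Rmult_assoc, H1; ring).
    assert (IZR k < INR n * phi) by (destruct H as [H' _]; destruct H' ; [lra| congruence]).
    assert (0 < (INR n * phi - IZR k) * (phi - 1)) by (apply Rmult_lt_0_compat; lra). nra.
Qed.

Lemma lemB n : Z.of_nat (a (a n + 1)) = (Z.of_nat (a n) + Z.of_nat n + 1)%Z.
Proof.
  rewrite (aZ (a n + 1)), INR_Z, Nat2Z.inj_add, aZ.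
  pose proof (fl_bounds (INR n * phi)). set (k := rfloor (INR n * phi)) in *.
  pose proof phi_sq; pose proof phi_bounds.
  assert (Hx : INR n * phi * phi = INR n * phi + INR n) by (rewrite Rmult_assoc, H0; ring).
  assert (0 <= (INR n * phi - IZR k) * (phi - 1)) by (apply Rmult_le_pos; lra).
  assert (0 < (IZR k + 1 - INR n * phi) * (phi - 1)) by (apply Rmult_lt_0_compat; lra).
  apply fl_char; norm; nra.
Qed.

Lemma lemb n : Z.of_nat (b n) = (Z.of_nat (a n) + Z.of_nat n)%Z.
Proof.
  unfold b. rewrite aZ.
  pose proof (fl_bounds (INR n * phi)). set (k := rfloor (INR n * phi)) in *.
  pose proof phi_sq; pose proof phi_bounds.
  rewrite Z2Nat.id.
  - apply fl_char; norm; simpl; rewrite Rmult_1_r, H0; lra.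
  - apply fl_nonneg. pose proof (pos_INR n). simpl. nra.
Qed.

Lemma lemC n : Z.of_nat (a (b n + 1)) = (Z.of_nat (a (b n)) + 1)%Z.
Proof.
  rewrite (aZ (b n + 1)), (aZ (b n)), INR_Z, Nat2Z.inj_add, lemb, aZ.
  rewrite (INR_Z (b n)), lemb, aZ.
  pose proof (fl_bounds (INR n * phi)). set (k := rfloor (INR n * phi)) in *.
  pose proof phi_sq; pose proof phi_bounds.
  assert (Hx : INR n * phi * phi = INR n * phi + INR n) by (rewrite Rmult_assoc, H0; ring).
  assert (0 <= (INR n * phi - IZR k) * (2 - phi)) by (apply Rmult_le_pos; lra).
  assert (0 < (IZR k + 1 - INR n * phi) * (2 - phi)) by (apply Rmult_lt_0_compat; lra).
  rewrite (fl_char (IZR (k + Z.of_nat n) * phi) (2*k + Z.of_nat n)).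
  - apply fl_char; norm; nra.
  - norm; nra.
  - norm; nra.
Qed.

Lemma F2 i : F (i + 2) = (F (i + 1) + F i)%nat.
Proof. replace (i + 2)%nat with (S (S i)) by lia. replace (i + 1)%nat with (S i) by lia. reflexivity. Qed.
Lemma F11 i : F (i + 1 + 1) = (F (i + 1) + F i)%nat.
Proof. replace (i + 1 + 1)%nat with (i + 2)%nat by lia. apply F2. Qed.

Theorem proposition3p5 (i : nat) (j : nat) :
  forall n : nat, (1 <= n)%nat ->
    (fij i (Z.of_nat j) n + 1 = fij i (Z.of_nat j - 1) n)%Z /\
    (fij (i + 1) (Z.of_nat j) n + 1 = fij (i + 1) (Z.of_nat j - 1) n)%Z /\
    (fij i 0 (a n) + 1 = fij (i + 1) (Z.of_nat (F (i + 1)) - 1) n)%Z /\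
    (fij i 0 (b n) + 1 = fij i (Z.of_nat (F (i + 2)) - 1) (b n + 1))%Z /\
    (fij (i + 1) 0 n + 1 = fij i (Z.of_nat (F (i + 2)) - 1) (a n + 1))%Z.
Proof.
  intros n Hn. unfold fij.
  rewrite F11, F2, !Nat2Z.inj_add, lemA, lemB, lemC by exact Hn.
  split; [ring|split; [ring|split; [ring|split; ring]]].
Qed.
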